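(* Let $K$ be a totally real field, $L/K$ a CM extension with CM type $\Phi$, and $M$ a regular, polarized, special realization over $K$ with coefficients in a number field $E$, of rank $n$ and pure of weight $w(M)$, with Hodge numbers $p_1(\sigma,\varphi)>\dots>p_n(\sigma,\varphi)$ for $\sigma\in J_K,\varphi\in J_E$. Fix $\varphi\in J_E$ and $r\in\{0,\dots,n\}$. If $r>0$, set $a_\tau^{(r,\varphi)}=w(M)-2p_r(\tau|_K,\varphi)+1$ for $\tau\in\Phi$; if $r=0$, set $a_\tau^{(0,\varphi)}=a^{(0)}$ for all $\tau\in\Phi$, where $a^{(0)}$ is a fixed integer with $a^{(0)}<\min\{w(M)-2p_1(\sigma,\psi)\}_{\sigma\in J_K,\psi\in J_E}$ and $a^{(0)}\equiv w(M)+1\pmod 2$. Let $\chi^{(r,\varphi)}$ be an algebraic Hecke character of $L$ of infinity type $(n_\tau^{(r,\varphi)})_{\tau\in J_L}$ with $n_\tau^{(r,\varphi)}-n_{\bar\tau}^{(r,\varphi)}=a_\tau^{(r,\varphi)}$ for all $\tau\in\Phi$. Then: (i) $\chi^{(r,\varphi)}$ is critical, except possibly when $n$ is even and $r=n/2$; in that case $\chi^{(n/2,\varphi)}$ is critical if and only if $p_{n/2}(\sigma,\varphi)\neq p_{n/2+1}(\sigma,\varphi)+1$ for every $\sigma\in J_K$. (ii) $n_\tau^{(r,\varphi)}>n_{\bar\tau}^{(r,\varphi)}$ for one (equivalently every) $\tau\in\Phi$ if and only if $r\in\{\lfloor n/2\rfloor+1,\dots,n\}$.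
   Context: $J_F=\operatorname{Hom}(F,\mathbb C)$; $\bar\tau=c\circ\tau$; a CM type $\Phi\subset J_L$ satisfies $J_L=\Phi\sqcup\bar\Phi$. A realization $M$ over $K$ with coefficients in $E$ (in Deligne's sense of realizations of motives for absolute Hodge cycles) has, for each $\sigma\in J_K$, a Betti realization $M_\sigma$ (an $E$-vector space of dimension $n$ with a Frobenius involution $F_\sigma$) and a Hodge decomposition $M_\sigma\otimes_{E,\varphi}\mathbb C=\bigoplus_{p+q=w(M)}M_\sigma^{pq}(\varphi)$ for $\varphi\in J_E$. $M$ is regular if all $M_\sigma^{pq}(\varphi)$ have dimension at most 1; then $p_1(\sigma,\varphi)>\dots>p_n(\sigma,\varphi)$ are the $p$ with $M_\sigma^{pq}(\varphi)\ne0$, and $p_i(\sigma,\varphi)+p_{n+1-i}(\sigma,\varphi)=w(M)$. $M$ is polarized if there is a nondegenerate morphism $M\otimes_E M\to E(-w(M))$, symmetric if $w(M)$ is even and alternating if odd; $M$ is special if each $F_\sigma$ acts on $M_\sigma^{w(M)/2,w(M)/2}$ by a scalar $\pm1$ independent of $\sigma$. An algebraic Hecke character $\chi$ of $L$ has infinity type $(n_\tau)_{\tau\in J_L}$ meaning $\chi(x)=\tau(x)^{-n_\tau}\bar\tau(x)^{-n_{\bar\tau}}$ on the identity component at the archimedean place of $\tau$; $\chi$ is critical if $n_\tau\ne n_{\bar\tau}$ for all $\tau\in J_L$. *)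

(* Defs.v *)
From HB Require Import structures.
From mathcomp Require Import all_boot all_order all_algebra.
Set Implicit Arguments. Unset Strict Implicit. Unset Printing Implicit Defensive.
Import Order.TTheory GRing.Theory Num.Theory.
Local Open Scope ring_scope.

(* J_L with restriction res : J_L -> J_K and c : tau |-> bar tau, for a CM
   (quadratic, totally imaginary) extension L of the totally real field K:
   c is a fixed-point-free involution compatible with restriction, and
   every sigma in J_K has exactly the two extensions tau, bar tau. *)
Definition CM_embeddings (JK JL : finType) (res : JL -> JK) (c : JL -> JL) :=
  [/\ involutive c,
      forall t, c t != t,
      forall t, res (c t) = res t,
      forall t t', res t = res t' -> t' = t \/ t' = c t
    & forall s, exists t, res t = s].

Definition CM_type (JL : finType) (c : JL -> JL) (Phi : {set JL}) :=
  forall t, (t \in Phi) != (c t \in Phi).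

Definition regular_Hodge_numbers (JK JE : finType) (n : nat) (w : int)
    (p : JK -> JE -> nat -> int) :=
  forall s psi,
    (forall i j : nat, (1 <= i)%N -> (i < j)%N -> (j <= n)%N -> p s psi j < p s psi i)
    /\ (forall i : nat, (1 <= i <= n)%N -> p s psi i + p s psi (n.+1 - i)%N = w).

Definition admissible_a0 (JK JE : finType) (w : int)
    (p : JK -> JE -> nat -> int) (a0 : int) :=
  (forall s psi, a0 < w - 2 * p s psi 1%N) /\ (a0 == w + 1 %[mod 2])%Z.

Definition a_exp (JK JL JE : finType) (res : JL -> JK) (w : int)
    (p : JK -> JE -> nat -> int) (a0 : int) (r : nat) (phi : JE) (t : JL) : int :=
  if r == 0%N then a0 else w - 2 * p (res t) phi r + 1.

(* Infinity types (n_tau) of algebraic Hecke characters of the CM field L: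
   n_tau + n_{bar tau} is independent of tau (Weil). *)
Definition Hecke_infinity_type (JL : finType) (c : JL -> JL) (nt : JL -> int) :=
  exists wt : int, forall t, nt t + nt (c t) = wt.

Definition critical (JL : finType) (c : JL -> JL) (nt : JL -> int) :=
  forall t, nt t != nt (c t).

(* Main.v *)
Require Import Defs.
From HB Require Import structures.
From mathcomp Require Import all_boot all_order all_algebra.
From mathcomp Require Import zify.
Import Order.TTheory GRing.Theory Num.Theory.
Local Open Scope ring_scope.

Lemma key (JK JE : finType) (n : nat) (w : int) (p : JK -> JE -> nat -> int)
    (phi : JE) (r : nat) (a0 : int) (s : JK) :
  (0 < n)%N -> regular_Hodge_numbers n w p -> admissible_a0 w p a0 -> (r <= n)%N ->
  let x := (if r == 0%N then a0 else w - 2 * p s phi r + 1) in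
  [/\ (n./2 < r)%N -> 0 < x, ~~ (n./2 < r)%N -> x <= 0,
      ~ (~~ odd n /\ r = n./2) -> x != 0 &
      ~~ odd n -> r = n./2 -> x = p s phi r.+1 - p s phi r + 1].
Proof.
move=> n0 Hreg [Ha0 _] rn x.
have [Hdec Hsym] := Hreg s phi.
rewrite /x; case: (eqVneq r 0%N) => [er|r0].
  subst r; rewrite ?eqxx.
  have h1 := Hsym 1%N ltac:(lia).
  have h2 : p s phi n <= p s phi 1%N.
    case: (ltnP 1 n) => h; first by apply/ltW; apply: Hdec; lia.
    have -> : n = 1%N by lia. by [].
  have := Ha0 s phi. move: h1 h2; rewrite subn1 /=.
  split; [lia|lia| |]; last by lia.
  move=> _; apply/eqP; lia.
have hr := Hsym r ltac:(lia).
set m := (n.+1 - r)%N in hr.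
case: (ltngtP r m) => Hrm.
- have hA : p s phi m < p s phi r by apply: Hdec; lia.
  split.
  + move=> h; lia.
  + move=> _; lia.
  + move=> h.
    have Hrm2 : (r.+1 < m)%N.
      case: (ltngtP r.+1 m) => //; first lia.
      move=> e; exfalso; apply: h; move: e; rewrite /m.
      have := odd_double_half n; case: (odd n) => /=; lia.
    have hB : p s phi m < p s phi r.+1 by apply: Hdec; lia.
    have hC : p s phi r.+1 < p s phi r by apply: Hdec; lia.
    apply/eqP; lia.
  + move=> ho er.
    have : m = r.+1.
      move: ho er; rewrite /m; have := odd_double_half n; case: (odd n) => /=; lia.
    move=> em; rewrite em in hr; lia.
- have hA : p s phi r < p s phi m by apply: Hdec; lia.
  split; [move=> h; lia| | move=> _; apply/eqP; lia|].
  + move=> h; exfalso; move: h; rewrite /m in Hrm; lia.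
  + move=> ho er; exfalso; move: ho er Hrm; rewrite /m.
    have := odd_double_half n; case: (odd n) => /=; lia.
- rewrite -Hrm in hr.
  split; [move=> h; lia| | move=> _; apply/eqP; lia|].
  + move=> h; exfalso; move: h; rewrite /m in Hrm; lia.
  + move=> ho er; exfalso; move: ho er Hrm; rewrite /m.
    have := odd_double_half n; case: (odd n) => /=; lia.
Qed.

Theorem lemma2p4 (JK JL JE : finType) (res : JL -> JK) (c : JL -> JL)
    (Phi : {set JL}) (n : nat) (w : int) (p : JK -> JE -> nat -> int)
    (phi : JE) (r : nat) (a0 : int) (nt : JL -> int) :
  (0 < #|JK|)%N ->
  CM_embeddings res c ->
  CM_type c Phi ->
  (0 < n)%N ->
  regular_Hodge_numbers n w p ->
  admissible_a0 w p a0 ->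
  (r <= n)%N ->
  Hecke_infinity_type c nt ->
  (forall t, t \in Phi -> nt t - nt (c t) = a_exp res w p a0 r phi t) ->
  (* (i) *)
  ((~ (~~ odd n /\ r = n./2) -> critical c nt) /\
   (~~ odd n -> r = n./2 ->
      (critical c nt <-> forall s, p s phi n./2 != p s phi (n./2).+1 + 1)))
  /\
  (* (ii) *)
  (((exists2 t, t \in Phi & nt (c t) < nt t) <-> ((n./2).+1 <= r <= n)%N) /\
   ((forall t, t \in Phi -> nt (c t) < nt t) <-> ((n./2).+1 <= r <= n)%N)).
Proof.
move=> cK [cinv _ cres _ csurj] Htype n0 Hreg Hadm rn _ Hnt.
have K t := @key _ _ n w p phi r a0 (res t) n0 Hreg Hadm rn.
have Hx t : t \in Phi -> nt t - nt (c t) =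
   (if r == 0%N then a0 else w - 2 * p (res t) phi r + 1) by move/Hnt.
have inPhi s : exists2 t, t \in Phi & res t = s.
  have [t Ht] := csurj s.
  have := Htype t; case: (boolP (t \in Phi)) => tP /=.
    by move=> _; exists t.
  by rewrite negbK => ctP; exists (c t); rewrite ?cres.
have [s0 _] : exists s : JK, true.
  by case/card_gt0P: cK => s _; exists s.
have [t0 t0P _] := inPhi s0.
have crit_of : (forall t, t \in Phi -> nt t != nt (c t)) -> critical c nt.
  move=> H t; case: (boolP (t \in Phi)) => tP; first exact: H.
  have ctP : c t \in Phi by move: (Htype t); rewrite (negbTE tP); case: (c t \in Phi).
  by have := H _ ctP; rewrite cinv eq_sym.
split; [split|split].
- move=> h; apply: crit_of => t tP.
  have [_ _ h3 _] := K t; have := h3 h; rewrite -(Hx t tP).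
  by rewrite subr_eq0.
- move=> ho er; split.
  + move=> Hc s; have [t tP <-] := inPhi s.
    have [_ _ _ h4] := K t; have := Hc t.
    rewrite -subr_eq0 (Hx t tP) (h4 ho er) -er.
    by apply: contra => /eqP e; apply/eqP; lia.
  + move=> Hs; apply: crit_of => t tP.
    have [_ _ _ h4] := K t; rewrite -subr_eq0 (Hx t tP) (h4 ho er).
    by have := Hs (res t); rewrite -er; apply: contra => /eqP e; apply/eqP; lia.
- split.
  + move=> [t tP lt]; rewrite rn andbT.
    have [_ h2 _ _] := K t; apply/negPn/negP => /h2.
    rewrite -(Hx t tP); lia.
  + move=> /andP [h _]; exists t0 => //.
    have [h1 _ _ _] := K t0; have := h1 h; rewrite -(Hx t0 t0P); lia.
- split.
  + move=> H; rewrite rn andbT.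
    have [_ h2 _ _] := K t0; apply/negPn/negP => /h2.
    have := H t0 t0P; rewrite -(Hx t0 t0P); lia.
  + move=> /andP [h _] t tP.
    have [h1 _ _ _] := K t; have := h1 h; rewrite -(Hx t tP); lia.
Qed.
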